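(* In ${\rm Br}({\rm G}_2)$ the following equalities hold: $$r_0r_1e_0=e_1e_0,\qquad e_0r_1r_0=e_0e_1,\qquad e_0e_1e_0=\delta^2e_0,\qquad r_1r_0e_1r_0r_1e_0=\delta e_0.$$
   Context: Let $\delta$ be an indeterminate. ${\rm Br}({\rm G}_2)$ is the $\mathbb{Z}[\delta^{\pm1}]$-algebra generated by $r_0,r_1,e_0,e_1$ subject to the following relations: - $r_0^2=r_1^2=1$; - $r_ie_i=e_ir_i=e_i$ for $i=0,1$; - $e_0^2=\delta^3e_0$ and $e_1^2=\delta e_1$; - $r_0e_1e_0=r_1e_0$ and $e_0e_1r_0=e_0r_1$; - $e_1r_0e_1r_0e_1=e_1$ and $e_1r_0e_1r_0r_1=e_1r_0r_1r_0$; - $e_0r_1e_0=\delta^2e_0$; - $r_1r_0e_1r_0e_1=r_0r_1r_0e_1$; - $(r_1r_0)^6=1$. *)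

(* Defs.v *)
From mathcomp Require Import all_boot all_algebra.
Set Implicit Arguments. Unset Strict Implicit. Unset Printing Implicit Defensive.
Import GRing.Theory.
Local Open Scope ring_scope.

(* A Z[delta^{+-1}]-algebra is a (unital, associative, possibly noncommutative)
   ring A together with the image d of delta: a central invertible element
   (di is its inverse).  The scalar action of delta^k is left multiplication by d^k. *)
Definition laurent_alg (A : pzRingType) (d di : A) : Prop :=
  [/\ forall x : A, d * x = x * d, d * di = 1 & di * d = 1].

Definition BrG2_rels (A : pzRingType) (d r0 r1 e0 e1 : A) : Prop :=
  (r0 * r0 = 1 /\ r1 * r1 = 1) /\
  (r0 * e0 = e0 /\ e0 * r0 = e0 /\ r1 * e1 = e1 /\ e1 * r1 = e1) /\
  (e0 * e0 = d ^+ 3 * e0 /\ e1 * e1 = d * e1) /\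
  (r0 * e1 * e0 = r1 * e0 /\ e0 * e1 * r0 = e0 * r1) /\
  (e1 * r0 * e1 * r0 * e1 = e1 /\ e1 * r0 * e1 * r0 * r1 = e1 * r0 * r1 * r0) /\
  e0 * r1 * e0 = d ^+ 2 * e0 /\
  r1 * r0 * e1 * r0 * e1 = r0 * r1 * r0 * e1 /\
  (r1 * r0) ^+ 6 = 1.

(* Main.v *)
Require Import Defs.
From mathcomp Require Import all_boot all_algebra.
Import GRing.Theory.
Local Open Scope ring_scope.

Theorem lemma9p2 (A : pzRingType) (d di r0 r1 e0 e1 : A) :
  laurent_alg d di -> BrG2_rels d r0 r1 e0 e1 ->
  [/\ r0 * r1 * e0 = e1 * e0,
      e0 * r1 * r0 = e0 * e1,
      e0 * e1 * e0 = d ^+ 2 * e0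
    & r1 * r0 * e1 * r0 * r1 * e0 = d * e0].
Proof.
move=> [dC _ _] [[r00 r11] [[r0e0 [e0r0 [r1e1 e1r1]]] [[e00 e11] [[h1 h2] [_ [h3 _]]]]]].
have H1 : r0 * r1 * e0 = e1 * e0.
  by rewrite -mulrA -h1 !mulrA r00 mul1r.
have H2 : e0 * r1 * r0 = e0 * e1.
  by rewrite -h2 -!mulrA r00 mulr1.
split => //.
  by rewrite -mulrA -H1 !mulrA e0r0.
have E : r1 * e0 = r0 * e1 * e0 by rewrite h1.
have S1 : r1 * r0 * e1 * r0 * r1 * e0 = r1 * r0 * (e1 * e1) * e0.
  by rewrite -(mulrA _ r1) E !mulrA -(mulrA _ r0 r0) r00 mulr1.
have S2 : r1 * r0 * (d * e1) * e0 = d * (r1 * (r0 * e1 * e0)).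
  by rewrite (mulrA (r1 * r0) d) -(dC (r1 * r0)) !mulrA.
by rewrite S1 e11 S2 h1 (mulrA r1 r1) r11 mul1r.
Qed.
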